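(* Let $A,B,C$ be real random variables on a common probability space with finite second moments, $\mathrm{Var}(B)>0$, $\mathbb{E}[A]\neq0$, $\mathbb{E}[C]\neq 0$, and set $R=\mathbb{E}[A]/\mathbb{E}[C]$. Let $n\ge1$ and let $(A_i,B_i,C_i)_{i=1,\dots,n}$ be i.i.d. copies of $(A,B,C)$. For $\alpha\in\mathbb{R}$ put $N_\alpha=\overline{A_n}+\alpha(\mathbb{E}[B]-\overline{B_n})$. Then the function $\alpha\mapsto\Phi(N_\alpha,\overline{C_n})$ has a unique minimizer on $\mathbb{R}$, namely $$\alpha_o'=\frac{\mathrm{Cov}(A,B)-R\,\mathrm{Cov}(B,C)}{\mathrm{Var}(B)}.$$
   Context: For a random variable $X$, $\overline{X_n}=\frac1n\sum_{i=1}^n X_i$ denotes the sample mean of the i.i.d. copies $X_1,\dots,X_n$. For real random variables $X,Z$ with finite second moments and $\mathbb{E}[Z]\neq0$, define the first-order (delta-method) approximation of the variance of the ratio $X/Z$: $$\Phi(X,Z)=\frac{\mathrm{Var}(X)}{\mathbb{E}[Z]^2}+\frac{\mathbb{E}[X]^2}{\mathbb{E}[Z]^4}\mathrm{Var}(Z)-2\frac{\mathbb{E}[X]}{\mathbb{E}[Z]^3}\mathrm{Cov}(X,Z).$$ The paper uses $\Phi(N_\alpha,\overline{C_n})$ as the variance of the CV/MC ratio estimator $N_\alpha/\overline{C_n}$ of $R$; $\mathbb{E}[B]$ is treated as a known constant. *)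

(* Defs.v *)
From HB Require Import structures.
From mathcomp Require Import all_boot all_order all_algebra.
From mathcomp Require Import all_classical all_reals all_analysis.
Set Implicit Arguments. Unset Strict Implicit. Unset Printing Implicit Defensive.
Import Order.TTheory GRing.Theory Num.Theory.
Local Open Scope classical_set_scope.
Local Open Scope ring_scope.

Definition sample_mean {d} {T : measurableType d} (n : nat) (R : realType) (X : 'I_n -> T -> R)
  : T -> R := fun w => n%:R^-1 * \sum_(i < n) X i w.

(* Real-valued mean / variance / covariance (finite under finite 2nd moments). *)
Definition Ex {d} {T : measurableType d} {R : realType} (P : probability T R)
  (X : T -> R) : R := fine 'E_P[X].
Definition Var {d} {T : measurableType d} {R : realType} (P : probability T R)
  (X : T -> R) : R := fine 'V_P[X].
Definition Cov {d} {T : measurableType d} {R : realType} (P : probability T R)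
  (X Y : T -> R) : R := fine (covariance P X Y).

(* First-order (delta-method) approximation of Var(X/Z). *)
Definition Phi {d} {T : measurableType d} {R : realType} (P : probability T R)
  (X Z : T -> R) : R :=
  Var P X / Ex P Z ^+ 2 + Ex P X ^+ 2 / Ex P Z ^+ 4 * Var P Z
  - 2 * (Ex P X / Ex P Z ^+ 3) * Cov P X Z.

Definition mutually_independent {d d'} {T : measurableType d}
  {T' : measurableType d'} {R : realType} (P : probability T R) (n : nat)
  (V : 'I_n -> T -> T') : Prop :=
  forall (J : {set 'I_n}) (E : 'I_n -> set T'),
    (forall i, measurable (E i)) ->
    P (\bigcap_(i in [set` J]) (V i @^-1` E i)) =
      (\prod_(i in J) P (V i @^-1` E i))%E.

Definition same_distribution {d d'} {T : measurableType d}
  {T' : measurableType d'} {R : realType} (P : probability T R)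
  (V W : T -> T') : Prop :=
  forall E : set T', measurable E -> P (V @^-1` E) = P (W @^-1` E).

(* Main.v *)
Set Warnings "-all".
Set Implicit Arguments. Unset Strict Implicit. Unset Printing Implicit Defensive.
Require Import Defs.
From HB Require Import structures.
From mathcomp Require Import all_boot all_order all_algebra.
From mathcomp Require Import all_classical all_reals all_analysis.
From mathcomp Require Import measurable_realfun.
From mathcomp Require Import ring lra.
Import Order.TTheory GRing.Theory Num.Theory.
Local Open Scope classical_set_scope.
Local Open Scope ring_scope.



Section Transfer.
Local Open Scope ereal_scope.
Context d d' (T : measurableType d) (T' : measurableType d') (R : realType)
  (P : probability T R).
Variables (V W : T -> T') (mV : measurable_fun setT V) (mW : measurable_fun setT W).
Hypothesis hVW : same_distribution P V W.

Lemma ge0_transfer (h : T' -> \bar R) : measurable_fun setT h ->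
  (forall y, 0 <= h y) -> \int[P]_x h (V x) = \int[P]_x h (W x).
Proof.
move=> mh h0.
have EV := ge0_integral_pushforward mV P measurableT mh (fun y _ => h0 y).
have EW := ge0_integral_pushforward mW P measurableT mh (fun y _ => h0 y).
rewrite !preimage_setT in EV EW.
rewrite -[LHS]EV -[RHS]EW.
apply: eq_measure_integral => A mA _.
exact: hVW.
Qed.

Lemma mtransfer (h : T' -> \bar R) : measurable_fun setT h ->
  \int[P]_x h (V x) = \int[P]_x h (W x).
Proof.
move=> mh; rewrite integralE [RHS]integralE.
rewrite (funepos_comp h V) (funeneg_comp h V) (funepos_comp h W) (funeneg_comp h W).
congr (_ - _).
  exact (@ge0_transfer h^\+ (measurable_funepos mh) (fun y => funepos_ge0 _ _)).
exact (@ge0_transfer h^\- (measurable_funeneg mh) (fun y => funeneg_ge0 _ _)).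
Qed.


Lemma Lnorm_transfer (f : T' -> R) : measurable_fun setT f ->
  Lnorm P 2%:E (EFin \o (f \o V)) = Lnorm P 2%:E (EFin \o (f \o W)).
Proof.
move=> mf; rewrite unlock; congr (_ `^ _).
apply: (@mtransfer (fun y => `|(f y)%:E| `^ 2)).
apply: (measurableT_comp (measurable_poweR _)).
change (measurable_fun setT (EFin \o (fun x => `|f x|)%R)); apply/measurable_EFinP.
exact: measurableT_comp.
Qed.

Lemma Lfun_transfer (f : T' -> R) : measurable_fun setT f ->
  (f \o W) \in Lfun P 2%:E -> (f \o V) \in Lfun P 2%:E.
Proof.
move=> mf /andP[_ hW]; apply/andP; split.
  by rewrite inE; exact: measurableT_comp.
move: hW; rewrite !inE /finite_norm /=. by rewrite (@Lnorm_transfer f mf).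
Qed.

Lemma E_transfer (f : T' -> R) : measurable_fun setT f ->
  'E_P[f \o V] = 'E_P[f \o W].
Proof.
move=> mf; rewrite unlock.
exact (@mtransfer (EFin \o f) (proj2 (measurable_EFinP _ _) mf)).
Qed.

Lemma Cov_transfer (f g : T' -> R) : measurable_fun setT f -> measurable_fun setT g ->
  covariance P (f \o V) (g \o V) = covariance P (f \o W) (g \o W).
Proof.
move=> mf mg; rewrite covariance.unlock (@E_transfer f mf) (@E_transfer g mg).
set a := fine _; set b := fine _.
apply: (@E_transfer (fun y => (f y - a) * (g y - b))%R).
apply: measurable_funM; apply: measurable_funB => //; exact: measurable_cst.
Qed.

End Transfer.


Section Indep.
Local Open Scope ereal_scope.
Context d (T : measurableType d) (R : realType) (P : probability T R).

Lemma distr_integrable d' (T' : measurableType d') (X : {mfun T >-> T'})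
  (h : T' -> \bar R) : measurable_fun setT h ->
  P.-integrable setT (h \o X) -> (distribution P X).-integrable setT h.
Proof.
move=> mh /integrableP[mhX iX]; apply/integrableP; split => //.
rewrite (@ge0_integral_distribution _ _ _ _ _ P X (abse \o h)).
- exact: iX.
- exact: measurableT_comp.
- by move=> y; exact: abse_ge0.
Qed.

Lemma indep_E (X Y : T -> R) : X \in Lfun P 2%:E -> Y \in Lfun P 2%:E ->
  (forall A B : set R, measurable A -> measurable B ->
     P (X @^-1` A `&` Y @^-1` B) = P (X @^-1` A) * P (Y @^-1` B)) ->
  'E_P[(X * Y)%R] = 'E_P[X] * 'E_P[Y].
Proof.
move=> X2 Y2 hind.
have Pfin : P setT \is a fin_num := fin_num_measure P _ measurableT.
have X1 := Lfun_subset12 Pfin X2.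
have Y1 := Lfun_subset12 Pfin Y2.
have XY1 := Lfun2_mul_Lfun1 X2 Y2.
have mX : measurable_fun setT X by move: X2; rewrite inE => /andP[]; rewrite inE.
have mY : measurable_fun setT Y by move: Y2; rewrite inE => /andP[]; rewrite inE.
pose W := fun w => (X w, Y w).
have mW : measurable_fun setT W by exact: measurable_fun_pair.
pose X' : {mfun T >-> R} := HB.pack X (isMeasurableFun.Build _ _ _ _ X mX).
pose Y' : {mfun T >-> R} := HB.pack Y (isMeasurableFun.Build _ _ _ _ Y mY).
pose W' : {mfun T >-> (R * R)%type} := HB.pack W (isMeasurableFun.Build _ _ _ _ W mW).
pose mu1 := distribution P X'.
pose mu2 := distribution P Y'.
pose muW := distribution P W'.
have rect : forall (A : set R) (B : set R), measurable A -> measurable B ->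
    muW (A `*` B) = mu1 A * mu2 B.
  by move=> A B mA mB; exact (hind A B mA mB).
pose h := fun z : (R * R)%type => (z.1 * z.2)%:E.
have mh : measurable_fun setT h.
  apply/measurable_EFinP; apply: measurable_funM.
    exact: measurable_fst.
  exact: measurable_snd.
have iXY : P.-integrable setT (h \o W') by exact/Lfun1_integrable.
have iX : P.-integrable setT ((EFin \o id) \o X') by exact/Lfun1_integrable.
have iY : P.-integrable setT ((EFin \o id) \o Y') by exact/Lfun1_integrable.
have mid : measurable_fun setT (EFin \o (@id R)) by exact/measurable_EFinP.
have i1 := @distr_integrable _ _ X' _ mid iX.
have i2 := @distr_integrable _ _ Y' _ mid iY.
have iW := @distr_integrable _ _ W' _ mh iXY.
have eqm : forall S, measurable S -> (mu1 \x mu2) S = muW S.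
  by move=> S mS; exact: (product_measure_unique rect mS).
have iprod : (mu1 \x mu2).-integrable setT h.
  apply/integrableP; split => //.
  rewrite (eq_measure_integral muW); last by move=> S mS _; exact: eqm.
  by case/integrableP: iW.
have EX : 'E_P[X] = \int[mu1]_x (x%:E).
  rewrite unlock; symmetry; exact: (integral_distribution (X := X') mid iX).
have EY : 'E_P[Y] = \int[mu2]_x (x%:E).
  rewrite unlock; symmetry; exact: (integral_distribution (X := Y') mid iY).
have EXY : 'E_P[(X * Y)%R] = \int[muW]_z h z.
  rewrite unlock; symmetry; exact: (integral_distribution (X := W') mh iXY).
rewrite EXY -(eq_measure_integral _ (fun S mS _ => eqm S mS)).
rewrite -(integral12_prod_meas1 iprod).
have EYfin : 'E_P[Y] \is a fin_num by exact: expectation_fin_num.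
rewrite /fubini_F /h /=.
under eq_integral => x _.
  under eq_integral => y _ do rewrite EFinM.
  rewrite (integralZl measurableT i2) -EY -(fineK EYfin).
  over.
rewrite /= (integralZr measurableT i1) -EX fineK //.
Qed.

End Indep.



Section Sums.
Context d (T : measurableType d) (R : realType) (P : probability T R).

Let Pfin : (P setT \is a fin_num)%E := fin_num_measure P _ measurableT.
Let le12 : (1 <= 2%:E :> \bar R)%E. Proof. by rewrite lee_fin ler1n. Qed.
Let le11 : (1 <= 1 :> R)%R. Proof. by []. Qed.
Let le12r : (1 <= 2 :> R)%R. Proof. by rewrite ler1n. Qed.
Local Hint Resolve Pfin le12 le11 le12r : core.
Let L12 (X : T -> R) : X \in Lfun P 2%:E -> X \in Lfun P 1.
Proof. exact: Lfun_subset12. Qed.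
Local Hint Resolve L12 : core.

Lemma L2_sum (I : Type) (s : seq I) (X : I -> T -> R) :
  (forall i, X i \in Lfun P 2%:E) -> (fun w => \sum_(i <- s) X i w) \in Lfun P 2%:E.
Proof.
move=> hX; rewrite -fct_sumE; apply: rpred_sum => i _; exact: hX.
Qed.

Lemma CovDl (X Y Z : T -> R) : X \in Lfun P 2%:E -> Y \in Lfun P 2%:E ->
  Z \in Lfun P 2%:E -> Cov P (X \+ Y) Z = Cov P X Z + Cov P Y Z.
Proof.
move=> X2 Y2 Z2; rewrite /Cov covarianceDl // fineD //.
  by apply: covariance_fin_num; auto; exact (Lfun2_mul_Lfun1 X2 Z2).
by apply: covariance_fin_num; auto; exact (Lfun2_mul_Lfun1 Y2 Z2).
Qed.

Lemma CovC (X Y : T -> R) : Cov P X Y = Cov P Y X.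
Proof. by rewrite /Cov covarianceC. Qed.

Lemma CovZl a (X Y : T -> R) : X \in Lfun P 2%:E -> Y \in Lfun P 2%:E ->
  Cov P (a \o* X) Y = a * Cov P X Y.
Proof.
move=> X2 Y2.
have XY1 : (X * Y)%R \in Lfun P 1 := Lfun2_mul_Lfun1 X2 Y2.
rewrite /Cov covarianceZl; auto.
by rewrite fineM // covariance_fin_num; auto.
Qed.

Lemma Cov_cstl c (X : T -> R) : Cov P (cst c) X = 0.
Proof. by rewrite /Cov covariance_cst_l. Qed.

Lemma Cov_suml (I : Type) (s : seq I) (X : I -> T -> R) (Z : T -> R) :
  (forall i, X i \in Lfun P 2%:E) -> Z \in Lfun P 2%:E ->
  Cov P (fun w => \sum_(i <- s) X i w) Z = \sum_(i <- s) Cov P (X i) Z.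
Proof.
move=> hX hZ; elim: s => [|a s IH].
  rewrite big_nil (_ : (fun w => _) = cst 0) ?Cov_cstl //.
  by apply/funext => w; rewrite big_nil.
rewrite big_cons (_ : (fun w => _) = X a \+ (fun w => \sum_(i <- s) X i w)).
  by rewrite CovDl ?IH //; exact: L2_sum.
by apply/funext => w; rewrite big_cons.
Qed.

Lemma Cov_sumr (I : Type) (s : seq I) (X : I -> T -> R) (Z : T -> R) :
  (forall i, X i \in Lfun P 2%:E) -> Z \in Lfun P 2%:E ->
  Cov P Z (fun w => \sum_(i <- s) X i w) = \sum_(i <- s) Cov P Z (X i).
Proof.
move=> hX hZ; rewrite CovC Cov_suml //; apply: eq_bigr => i _; exact: CovC.
Qed.

Lemma Ex_sum (I : Type) (s : seq I) (X : I -> T -> R) :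
  (forall i, X i \in Lfun P 2%:E) ->
  Ex P (fun w => \sum_(i <- s) X i w) = \sum_(i <- s) Ex P (X i).
Proof.
move=> hX; elim: s => [|a s IH].
  rewrite big_nil (_ : (fun w => _) = cst 0) /Ex ?expectation_cst //.
  by apply/funext => w; rewrite big_nil.
rewrite big_cons (_ : (fun w => _) = X a \+ (fun w => \sum_(i <- s) X i w)).
  have S2 := L2_sum s hX.
  rewrite /Ex expectationD; auto.
  rewrite fineD ?expectation_fin_num; auto.
  by rewrite -IH.
by apply/funext => w; rewrite big_cons.
Qed.

Lemma sample_meanE n (X : 'I_n -> T -> R) :
  sample_mean X = n%:R^-1 \o* (fun w => \sum_(i < n) X i w).
Proof. by apply/funext => w; rewrite /sample_mean /= mulrC. Qed.

Lemma L2_mean n (X : 'I_n -> T -> R) : (forall i, X i \in Lfun P 2%:E) ->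
  sample_mean X \in Lfun P 2%:E.
Proof.
move=> hX; rewrite sample_meanE; exact (Lfun_scale n%:R^-1 le12r (L2_sum (index_enum 'I_n) hX)).
Qed.

Lemma Ex_mean n (X : 'I_n -> T -> R) : (forall i, X i \in Lfun P 2%:E) ->
  Ex P (sample_mean X) = n%:R^-1 * \sum_(i < n) Ex P (X i).
Proof.
move=> hX; rewrite /Ex sample_meanE.
rewrite (expectationZl (X := fun w => \sum_(i < n) X i w)).
  rewrite /= fineM //; first by rewrite -Ex_sum.
  by apply: expectation_fin_num; apply: L12; exact: L2_sum.
by apply: L12; exact: L2_sum.
Qed.

Lemma Cov_mean n (X Y : 'I_n -> T -> R) : (forall i, X i \in Lfun P 2%:E) ->
  (forall i, Y i \in Lfun P 2%:E) ->
  Cov P (sample_mean X) (sample_mean Y) =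
  n%:R^-1 * (n%:R^-1 * \sum_(i < n) \sum_(j < n) Cov P (X i) (Y j)).
Proof.
move=> hX hY.
have SX := L2_sum (index_enum 'I_n) hX; have SY := L2_sum (index_enum 'I_n) hY.
rewrite !sample_meanE (CovZl _ SX (Lfun_scale _ le12r SY)) CovC (CovZl _ SY SX).
rewrite CovC Cov_suml //; congr (_ * (_ * _)); apply: eq_bigr => i _.
exact: Cov_sumr.
Qed.

End Sums.



Section Block.
Local Open Scope ereal_scope.
Context d (T : measurableType d) (R : realType) (P : probability T R).
Context d' (T' : measurableType d') (n : nat) (V : 'I_n -> T -> T') (V0 : T -> T').
Hypotheses (mV : forall i, measurable_fun setT (V i)) (mV0 : measurable_fun setT V0).
Hypothesis hind : mutually_independent P V.
Hypothesis hid : forall i, same_distribution P (V i) V0.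
Hypothesis hn : (0 < n)%N.

Lemma indep2 i j : i != j -> forall S1 S2 : set T', measurable S1 -> measurable S2 ->
  P (V i @^-1` S1 `&` V j @^-1` S2) = P (V i @^-1` S1) * P (V j @^-1` S2).
Proof.
move=> ij S1 S2 mS1 mS2.
pose E := fun k => if k == i then S1 else if k == j then S2 else setT.
have mE : forall k, measurable (E k).
  by move=> k; rewrite /E; case: ifP => _ //; case: ifP.
have := @hind [set i; j]%SET E mE.
have ji : (j == i) = false by rewrite eq_sym (negbTE ij).
have -> : \bigcap_(k in [set` [set i; j]%SET]) V k @^-1` E k = V i @^-1` S1 `&` V j @^-1` S2.
  apply/seteqP; split => w.
    move=> hw; split.
      have := hw i; rewrite /E eqxx; apply; by rewrite /= !inE eqxx.
    have := hw j; rewrite /E ji eqxx; apply; by rewrite /= !inE eqxx orbT.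
  move=> [h1 h2] k; rewrite /= !inE => /orP[/eqP->|/eqP->].
    by rewrite /E eqxx.
  by rewrite /E ji eqxx.
rewrite big_setU1 /=; last by rewrite inE eq_sym ji.
by rewrite big_set1 /E eqxx ji eqxx.
Qed.

Variables (p q : T' -> R) (mp : measurable_fun setT p) (mq : measurable_fun setT q).
Hypotheses (hp2 : p \o V0 \in Lfun P 2%:E) (hq2 : q \o V0 \in Lfun P 2%:E).

Lemma blk_L2 i : p \o V i \in Lfun P 2%:E.
Proof. exact: (Lfun_transfer (mV i) mV0 (hid i) mp hp2). Qed.

Lemma blk_E i : Ex P (p \o V i) = Ex P (p \o V0).
Proof. by rewrite /Ex (E_transfer (mV i) mV0 (hid i) mp). Qed.

Lemma blk_Cov i : Cov P (p \o V i) (q \o V i) = Cov P (p \o V0) (q \o V0).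
Proof. by rewrite /Cov (Cov_transfer (mV i) mV0 (hid i) mp mq). Qed.

Lemma blk_Cov0 i j : i != j -> Cov P (p \o V i) (q \o V j) = 0%R.
Proof.
move=> ij.
have Pfin : P setT \is a fin_num := fin_num_measure P _ measurableT.
have Xi2 : p \o V i \in Lfun P 2%:E by exact: blk_L2.
have Yj2 : q \o V j \in Lfun P 2%:E.
  exact: (Lfun_transfer (mV j) mV0 (hid j) mq hq2).
have X1 := Lfun_subset12 Pfin Xi2.
have Y1 := Lfun_subset12 Pfin Yj2.
have XY1 := Lfun2_mul_Lfun1 Xi2 Yj2.
rewrite /Cov covarianceE // indep_E //.
  rewrite subee //; apply: fin_numM; exact: expectation_fin_num.
move=> A B mA mB.
have mpA : measurable (p @^-1` A) by rewrite -[p @^-1` A]setTI; exact: mp.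
have mqB : measurable (q @^-1` B) by rewrite -[q @^-1` B]setTI; exact: mq.
exact: (indep2 ij mpA mqB).
Qed.


Local Close Scope ereal_scope.
Lemma blk_Ex_mean : Ex P (sample_mean (fun i => p \o V i)) = Ex P (p \o V0).
Proof.
rewrite Ex_mean; last exact: blk_L2.
rewrite (eq_bigr (fun _ => Ex P (p \o V0))); last by move=> i _; exact: blk_E.
have n0 : n%:R != 0 :> R by rewrite pnatr_eq0 -lt0n hn.
by rewrite sumr_const card_ord -[X in _ * X]mulr_natr mulrCA mulVf ?mulr1.
Qed.

Lemma blk_Cov_mean : Cov P (sample_mean (fun i => p \o V i)) (sample_mean (fun i => q \o V i))
  = Cov P (p \o V0) (q \o V0) / n%:R.
Proof.
have hq : forall i, q \o V i \in Lfun P 2%:E.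
  by move=> i; exact: (Lfun_transfer (mV i) mV0 (hid i) mq hq2).
rewrite Cov_mean; [|exact: blk_L2|exact: hq].
have -> : \sum_(i < n) \sum_(j < n) Cov P (p \o V i) (q \o V j) =
          \sum_(i < n) Cov P (p \o V0) (q \o V0).
  apply: eq_bigr => i _; rewrite (bigD1 i) //= big1 ?addr0 ?blk_Cov //.
  by move=> j ji; rewrite blk_Cov0 // eq_sym.
have n0 : n%:R != 0 :> R by rewrite pnatr_eq0 -lt0n hn.
rewrite sumr_const card_ord -[X in _ * (_ * X)]mulr_natr. by field.
Qed.

End Block.



Section NLemmas.
Context d (T : measurableType d) (R : realType) (P : probability T R).
Let Pfin : (P setT \is a fin_num)%E := fin_num_measure P _ measurableT.
Let le12r : (1 <= 2 :> R)%R. Proof. by rewrite ler1n. Qed.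
Let L12 (X : T -> R) : X \in Lfun P 2%:E -> X \in Lfun P 1.
Proof. exact: Lfun_subset12. Qed.
Local Hint Resolve Pfin le12r L12 : core.

Variables (X Y : T -> R) (hX : X \in Lfun P 2%:E) (hY : Y \in Lfun P 2%:E).
Variables (c a : R).

Let NE : (fun w => X w + a * (c - Y w)) = X \+ a \o* (cst c \- Y).
Proof. by apply/funext => w /=; rewrite mulrC. Qed.

Let L2B : (cst c \- Y) \in Lfun P 2%:E.
Proof. by apply: rpredB => //; exact: Lfun_cst. Qed.

Lemma L2_N : (fun w => X w + a * (c - Y w)) \in Lfun P 2%:E.
Proof. by rewrite NE; apply: rpredD => //; exact: Lfun_scale. Qed.

Lemma CovNl (Z : T -> R) : Z \in Lfun P 2%:E ->
  Cov P (fun w => X w + a * (c - Y w)) Z = Cov P X Z - a * Cov P Y Z.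
Proof.
move=> hZ; rewrite NE CovDl //; last exact: Lfun_scale.
rewrite CovZl //; congr (_ + _); rewrite -mulrN; congr (_ * _).
rewrite /Cov covarianceBl //; last exact: Lfun_cst.
by rewrite covariance_cst_l sub0e fineN.
Qed.

Lemma CovNr (Z : T -> R) : Z \in Lfun P 2%:E ->
  Cov P Z (fun w => X w + a * (c - Y w)) = Cov P Z X - a * Cov P Z Y.
Proof. by move=> hZ; rewrite CovC CovNl // !(CovC _ Z). Qed.

Lemma ExN : Ex P (fun w => X w + a * (c - Y w)) = Ex P X + a * (c - Ex P Y).
Proof.
rewrite NE /Ex expectationD //; last by apply: L12; exact: Lfun_scale.
rewrite expectationZl //; last by apply: L12.
rewrite expectationB; [|exact: Lfun_cst|auto].
rewrite expectation_cst.
have Xf : ('E_P[X] \is a fin_num)%E by apply: expectation_fin_num; auto.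
have Yf : ('E_P[Y] \is a fin_num)%E by apply: expectation_fin_num; auto.
rewrite -(fineK Xf) -(fineK Yf) -EFinB -EFinM -EFinD /=.
  by rewrite mulrC.
by auto.
Qed.

End NLemmas.

Unset Implicit Arguments. Set Strict Implicit.

Theorem mainTheorem3 (d : measure_display) (T : measurableType d)
  (R : realType) (P : probability T R)
  (A B C : {RV P >-> R})
  (hA2 : (A : T -> R) \in Lfun P 2) (hB2 : (B : T -> R) \in Lfun P 2)
  (hC2 : (C : T -> R) \in Lfun P 2)
  (hVB : 0 < Var P B) (hEA : Ex P A != 0) (hEC : Ex P C != 0)
  (n : nat) (hn : (0 < n)%N)
  (Ai Bi Ci : 'I_n -> {RV P >-> R})
  (hind : mutually_independent P (fun i w => (Ai i w, Bi i w, Ci i w)))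
  (hid : forall i, same_distribution P (fun w => (Ai i w, Bi i w, Ci i w))
                                       (fun w => (A w, B w, C w))) :
  let Rr := Ex P A / Ex P C in
  let N := fun alpha : R => fun w : T =>
    sample_mean (fun i => (Ai i : T -> R)) w
    + alpha * (Ex P B - sample_mean (fun i => (Bi i : T -> R)) w) in
  let Cbar := sample_mean (fun i => (Ci i : T -> R)) in
  let alpha_o := (Cov P A B - Rr * Cov P B C) / Var P B in
  (forall alpha, Phi P (N alpha_o) Cbar <= Phi P (N alpha) Cbar) /\
  (forall alpha', (forall alpha, Phi P (N alpha') Cbar <= Phi P (N alpha) Cbar) ->
     alpha' = alpha_o).
Proof.
move=> Rr N Cbar alpha_o.
pose V := fun (i : 'I_n) w => (Ai i w, Bi i w, Ci i w).
pose V0 := fun w => (A w, B w, C w).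
have mV : forall i, measurable_fun setT (V i).
  move=> i; apply: measurable_fun_pair; [apply: measurable_fun_pair|];
    exact: measurable_funP.
have mV0 : measurable_fun setT V0.
  apply: measurable_fun_pair; [apply: measurable_fun_pair|]; exact: measurable_funP.
pose p1 := fun z : (R * R * R)%type => z.1.1.
pose p2 := fun z : (R * R * R)%type => z.1.2.
pose p3 := fun z : (R * R * R)%type => z.2.
have mp1 : measurable_fun setT p1 := measurableT_comp measurable_fst measurable_fst.
have mp2 : measurable_fun setT p2 := measurableT_comp measurable_snd measurable_fst.
have mp3 : measurable_fun setT p3 := measurable_snd.
have hp1 : p1 \o V0 \in Lfun P 2%:E := hA2.
have hp2 : p2 \o V0 \in Lfun P 2%:E := hB2.
have hp3 : p3 \o V0 \in Lfun P 2%:E := hC2.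
pose Ab := sample_mean (fun i => (Ai i : T -> R)).
pose Bb := sample_mean (fun i => (Bi i : T -> R)).
have hAb : Ab \in Lfun P 2%:E := L2_mean (blk_L2 mV mV0 hid mp1 hp1).
have hBb : Bb \in Lfun P 2%:E := L2_mean (blk_L2 mV mV0 hid mp2 hp2).
have hCb : Cbar \in Lfun P 2%:E := L2_mean (blk_L2 mV mV0 hid mp3 hp3).
have EAb : Ex P Ab = Ex P A := blk_Ex_mean mV mV0 hid hn mp1 hp1.
have EBb : Ex P Bb = Ex P B := blk_Ex_mean mV mV0 hid hn mp2 hp2.
have ECb : Ex P Cbar = Ex P C := blk_Ex_mean mV mV0 hid hn mp3 hp3.
have KAB : Cov P Ab Bb = Cov P A B / n%:R :=
  blk_Cov_mean mV mV0 hind hid hn mp1 mp2 hp1 hp2.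
have VBB : Cov P Bb Bb = Var P B / n%:R :=
  blk_Cov_mean mV mV0 hind hid hn mp2 mp2 hp2 hp2.
have LBC : Cov P Bb Cbar = Cov P B C / n%:R :=
  blk_Cov_mean mV mV0 hind hid hn mp2 mp3 hp2 hp3.
have VarCov : forall X : T -> R, Var P X = Cov P X X by [].
pose EA := Ex P A; pose EB := Ex P B; pose EC := Ex P C.
pose cAA := Cov P Ab Ab; pose cAC := Cov P Ab Cbar; pose VC := Var P Cbar.
pose cAB := Cov P A B; pose cBC := Cov P B C; pose vB := Var P B.
have hN : forall a, Phi P (N a) Cbar =
   (cAA - 2 * a * (cAB / n%:R) + a ^+ 2 * (vB / n%:R)) / EC ^+ 2
   + EA ^+ 2 / EC ^+ 4 * VC - 2 * (EA / EC ^+ 3) * (cAC - a * (cBC / n%:R)).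
  move=> a; rewrite /Phi.
  have -> : N a = (fun w => Ab w + a * (Ex P B - Bb w)) by [].
  have hF := L2_N hAb hBb (Ex P B) a.
  rewrite VarCov (CovNl hAb hBb _ _ hCb) (CovNl hAb hBb _ _ hF).
  rewrite (CovNr hAb hBb _ _ hAb) (CovNr hAb hBb _ _ hBb).
  rewrite (ExN hAb hBb) EAb EBb ECb (CovC P Bb Ab) KAB VBB LBC.
  rewrite -/EA -/EC -/cAA -/cAC -/VC -/cAB -/cBC -/vB.
  rewrite subrr mulr0 addr0.
  by field; rewrite hEC andbT pnatr_eq0 -lt0n hn.
have n0 : n%:R != 0 :> R by rewrite pnatr_eq0 -lt0n hn.
have vB0 : vB != 0 by rewrite gt_eqF.
have cpos : 0 < vB / (n%:R * EC ^+ 2).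
  by rewrite divr_gt0 // mulr_gt0 ?ltr0n // exprn_even_gt0.
have key : forall a, Phi P (N a) Cbar =
    Phi P (N alpha_o) Cbar + vB / (n%:R * EC ^+ 2) * (a - alpha_o) ^+ 2.
  move=> a; rewrite !hN /alpha_o /Rr -/EA -/EC -/cAB -/cBC -/vB.
  by field; rewrite hEC vB0 n0.
split.
  move=> a; rewrite [leRHS]key lerDl; apply: mulr_ge0; first exact: ltW.
  exact: sqr_ge0.
move=> a' H; have := H alpha_o; rewrite [leLHS]key gerDl.
rewrite pmulr_rle0 // => hle.
have : (a' - alpha_o) ^+ 2 == 0 by rewrite eq_le hle sqr_ge0.
by rewrite sqrf_eq0 subr_eq0 => /eqP.
Qed.
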